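(* Let $(\phi,y)$ be feasible for the joint routing and caching problem (minimize $T(\phi,y)=\sum_{(i,j)\in\mathcal E}D_{ij}(F_{ij})+\sum_i B_i(Y_i)$ subject to $\phi_{ij}(k),y_i(k)\in[0,1]$ and flow conservation), and suppose that for all $i\in\mathcal V,k\in\mathcal C$, with $$\delta_i(k)=\min\Big\{\frac{B_i'(Y_i)}{t_i(k)},\ \min_{j\in\mathcal N(i)}\Big(D'_{ji}(F_{ji})+\frac{\partial T}{\partial r_j(k)}\Big)\Big\}$$ (where $B_i'(Y_i)/t_i(k):=\infty$ if $t_i(k)=0$), we have: $B_i'(Y_i)=t_i(k)\delta_i(k)$ if $y_i(k)>0$ and $B_i'(Y_i)\ge t_i(k)\delta_i(k)$ if $y_i(k)=0$; and for all $j\in\mathcal N(i)$, $D'_{ji}(F_{ji})+\frac{\partial T}{\partial r_j(k)}=\delta_i(k)$ if $\phi_{ij}(k)>0$ and $\ge\delta_i(k)$ if $\phi_{ij}(k)=0$. Then for every feasible $(\phi^\dagger,y^\dagger)$ (with arrival rates $t^\dagger$), $$T(\phi^\dagger,y^\dagger)-T(\phi,y)\ \ge\ \sum_{i\in\mathcal V}\sum_{k\in\mathcal C}\delta_i(k)\big(y_i(k)-y_i^\dagger(k)\big)\big(t_i^\dagger(k)-t_i(k)\big).$$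
   Context: Network model. $\mathcal G=(\mathcal V,\mathcal E)$ is a finite directed graph with $(j,i)\in\mathcal E$ whenever $(i,j)\in\mathcal E$; $\mathcal N(i)=\{j:(i,j)\in\mathcal E\}$. $\mathcal C$ is a finite catalog; item $k$ has nonempty designated server set $\mathcal S_k\subseteq\mathcal V$. Exogenous request rates $r_i(k)\ge0$. Variables: $\phi_{ij}(k)\in[0,1]$ with $\phi_{ij}(k)=0$ if $(i,j)\notin\mathcal E$, and $y_i(k)\in[0,1]$. Flow conservation: $y_i(k)+\sum_{j}\phi_{ij}(k)=1$ if $i\notin\mathcal S_k$ and $=0$ if $i\in\mathcal S_k$. A pair $(\phi,y)$ is feasible if it satisfies these constraints and the arrival rates $t_i(k)$, solving $t_i(k)=r_i(k)+\sum_j t_j(k)\phi_{ji}(k)$, are uniquely determined and nonnegative (e.g. when $\phi$ is loop-free, i.e. for each $k$ the graph with edges $\{(i,j):\phi_{ij}(k)>0\}$ is acyclic). $f_{ji}(k)=t_i(k)\phi_{ij}(k)$, $F_{ij}=\sum_k f_{ij}(k)$, $Y_i=\sum_k y_i(k)$. $D_{ij},B_i$ are continuously differentiable, increasing, convex, zero at $0$. The marginal cost $\frac{\partial T}{\partial r_i(k)}$ satisfies $\frac{\partial T}{\partial r_i(k)}=\sum_{j\in\mathcal N(i)}\phi_{ij}(k)\big(D'_{ji}(F_{ji})+\frac{\partial T}{\partial r_j(k)}\big)$, and equals $0$ if $i\in\mathcal S_k$ or $y_i(k)=1$. *)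

(* Defs.v *)
From HB Require Import structures.
From mathcomp Require Import all_boot all_order all_algebra.
From mathcomp Require Import all_classical all_reals all_analysis.
Set Implicit Arguments. Unset Strict Implicit. Unset Printing Implicit Defensive.
Import Order.TTheory GRing.Theory Num.Theory.
Import numFieldNormedType.Exports.
Local Open Scope ring_scope.

Definition arrival_eq (R : realType) (V C : finType)
  (r : V -> C -> R) (phi : V -> V -> C -> R) (t : V -> C -> R) : Prop :=
  forall (i : V) (k : C), t i k = r i k + \sum_(j : V) t j k * phi j i k.

(* Link flow F_ab = sum_k f_ab(k), where f_ab(k) = t_b(k) phi_ba(k)
   (requests go b -> a, content comes back on link (a,b)). *)
Definition flow (R : realType) (V C : finType)
  (phi : V -> V -> C -> R) (t : V -> C -> R) (a b : V) : R :=
  \sum_(k : C) t b k * phi b a k.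

Definition cache_load (R : realType) (V C : finType)
  (y : V -> C -> R) (i : V) : R := \sum_(k : C) y i k.

Definition total_cost (R : realType) (V C : finType) (E : rel V)
  (D : V -> V -> R -> R) (B : V -> R -> R)
  (phi : V -> V -> C -> R) (y : V -> C -> R) (t : V -> C -> R) : R :=
  \sum_(i : V) \sum_(j : V | E i j) D i j (flow phi t i j)
  + \sum_(i : V) B i (cache_load y i).

Definition feasible (R : realType) (V C : finType) (E : rel V)
  (S : C -> {set V}) (r : V -> C -> R)
  (phi : V -> V -> C -> R) (y : V -> C -> R) : Prop :=
  [/\ (forall i j k, 0 <= phi i j k <= 1),
      (forall i j k, ~~ E i j -> phi i j k = 0),
      (forall i k, 0 <= y i k <= 1),
      (forall i k, y i k + \sum_(j : V) phi i j k = if i \in S k then 0 else 1) &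
      ((exists! t : V -> C -> R, arrival_eq r phi t) /\
       (forall t, arrival_eq r phi t -> forall i k, 0 <= t i k))].

Definition cost_fun (R : realType) (f : R -> R) : Prop :=
  [/\ f 0 = 0,
      (forall x : R, derivable f x 1),
      continuous (derive1 f),
      (forall x y : R, 0 <= x -> x < y -> f x < f y) &
      (forall x y a : R, 0 <= x -> 0 <= y -> 0 <= a <= 1 ->
         f (a * x + (1 - a) * y) <= a * f x + (1 - a) * f y)].

(* dT i k plays the role of dT/dr_i(k): it satisfies the marginal-cost recursion. *)
Definition marginal_cost (R : realType) (V C : finType) (E : rel V)
  (S : C -> {set V}) (D : V -> V -> R -> R)
  (phi : V -> V -> C -> R) (y : V -> C -> R) (t : V -> C -> R)
  (dT : V -> C -> R) : Prop :=
  forall i k,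
    dT i k = \sum_(j : V | E i j)
               phi i j k * (derive1 (D j i) (flow phi t j i) + dT j k)
    /\ ((i \in S k) || (y i k == 1) -> dT i k = 0).

Definition delta (R : realType) (V C : finType) (E : rel V)
  (D : V -> V -> R -> R) (B : V -> R -> R)
  (phi : V -> V -> C -> R) (y : V -> C -> R) (t : V -> C -> R)
  (dT : V -> C -> R) (i : V) (k : C) : \bar R :=
  Order.min
    (if t i k == 0 then +oo%E
     else ((derive1 (B i) (cache_load y i)) / t i k)%:E)
    (\big[Order.min/+oo%E]_(j : V | E i j)
        ((derive1 (D j i) (flow phi t j i) + dT j k)%:E)).

(* Main.v *)
Require Import Defs.
From HB Require Import structures.
From mathcomp Require Import all_boot all_order all_algebra.
From mathcomp Require Import all_classical all_reals all_analysis ring lra.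
Import Order.TTheory GRing.Theory Num.Theory.
Import numFieldNormedType.Exports.
Local Open Scope ring_scope.
Local Open Scope classical_set_scope.

Lemma conv_grad (R : realType) (f : R -> R) a b :
  cost_fun f -> 0 <= a -> 0 <= b -> derive1 f a * (b - a) <= f b - f a.
Proof.
case=> _ hder _ _ hconv a0 b0.
have dif : differentiable f a := (derivable1_diffP f a).1 (hder a).
have dv : derivable f a (b - a) by apply: diff_derivable.
have -> : derive1 f a * (b - a) = 'D_(b - a) f a.
  rewrite deriveE // derive1E' // -[in RHS](mulr1 (b - a)).
  by rewrite -[(b - a) * 1]/((b - a) *: (1:R)) linearZ /= mulrC.
rewrite /derive cvg_at_rightE //.
set g := (fun h : R => _).
have cg : cvg (g @ 0^'+).
  apply/cvg_ex; exists (lim (g @ 0^')).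
  move=> A /dv /nbhs_ballP [_ /posnumP[e] xe_A].
  by exists e%:num => //= z xe_z; rewrite lt_def => /andP [xney _]; apply: xe_A.
apply: limr_le => //.
near=> h.
have h0 : 0 < h by near: h; exact: nbhs_right_gt.
have h1 : h <= 1 by near: h; exact: nbhs_right_le.
rewrite /g /= -[h^-1 *: _]/(h^-1 * _) mulrC ler_pdivrMr // mulrC.
have := hconv b a h b0 a0 (introT andP (conj (ltW h0) h1)).
move=> hc.
have e : h * b + (1 - h) * a = h *: (b - a) + a by rewrite /GRing.scale /=; ring.
rewrite /= -e; lra.
Unshelve. all: by end_near.
Qed.

Theorem theorem3 (R : realType) (V C : finType) (E : rel V)
  (S : C -> {set V}) (r : V -> C -> R)
  (D : V -> V -> R -> R) (B : V -> R -> R)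
  (hE : forall i j, E i j -> E j i)
  (hS : forall k, S k != finset.set0)
  (hr : forall i k, 0 <= r i k)
  (hD : forall i j, E i j -> cost_fun (D i j))
  (hB : forall i, cost_fun (B i))
  (phi : V -> V -> C -> R) (y : V -> C -> R) (t : V -> C -> R)
  (dT : V -> C -> R)
  (hfeas : feasible E S r phi y)
  (ht : arrival_eq r phi t)
  (hdT : marginal_cost E S D phi y t dT)
  (hopt : forall (i : V) (k : C),
     [/\ (0 < y i k ->
           ((derive1 (B i) (cache_load y i))%:E
             = (t i k)%:E * delta E D B phi y t dT i k)%E),
         (y i k = 0 ->
           ((t i k)%:E * delta E D B phi y t dT i k
             <= (derive1 (B i) (cache_load y i))%:E)%E) &
         (forall j : V, E i j ->
           (0 < phi i j k ->
              ((derive1 (D j i) (flow phi t j i) + dT j k)%:E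
                = delta E D B phi y t dT i k)%E)
           /\ (phi i j k = 0 ->
              (delta E D B phi y t dT i k
                <= (derive1 (D j i) (flow phi t j i) + dT j k)%:E)%E))]) :
  forall (phi' : V -> V -> C -> R) (y' : V -> C -> R) (t' : V -> C -> R),
    feasible E S r phi' y' -> arrival_eq r phi' t' ->
    (\sum_(i : V) \sum_(k : C)
        delta E D B phi y t dT i k * ((y i k - y' i k) * (t' i k - t i k))%:E
      <= (total_cost E D B phi' y' t' - total_cost E D B phi y t)%:E)%E.
Proof.
move=> phi' y' t' hf' ht'.
case: hfeas => hphi hphiE hy hcons [_ tnn].
have tge0 := tnn t ht.
case: hf' => hphi' hphiE' hy' hcons' [_ tnn'].
have t'ge0 := tnn' t' ht'.
have Esym i j : E j i = E i j by apply/idP/idP => /hE.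
set del := delta E D B phi y t dT.
set d := fun i k => fine (del i k).
set w := fun i j k => derive1 (D j i) (flow phi t j i) + dT j k.
set Bd := fun i => derive1 (B i) (cache_load y i).
set c := fun i k => if i \in S k then (0:R) else 1.
have hc i k : \sum_j phi i j k = c i k - y i k.
  by rewrite /c -(hcons i k); ring.
have hc' i k : \sum_j phi' i j k = c i k - y' i k.
  by rewrite /c -(hcons' i k); ring.
have dcase i k : del i k = (d i k)%:E \/
    [/\ del i k = +oo%E, t i k = 0 & forall j, ~~ E i j].
  have hM : (del i k <= \big[Order.min/+oo%E]_(j : V | E i j) ((w i j k)%:E))%E.
    by rewrite /del /delta ge_min lexx orbT.
  have hX : (del i k <= (if t i k == 0%R then +oo%E
     else ((derive1 (B i) (cache_load y i)) / t i k)%R%:E))%E.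
    by rewrite /del /delta ge_min lexx.
  have hn : (-oo < del i k)%E.
    rewrite /del /delta lt_min; apply/andP; split.
      by case: ifP => _; rewrite ?ltNyr // ltNye.
    by apply: lt_bigmin => [|j _]; rewrite ?ltNyr // ltNye.
  case hv : (del i k) => [x||].
  - by left; rewrite /d hv.
  - right; split => //.
      move: hX; rewrite hv; case: eqP => // _; by rewrite leye_eq.
    move=> j; apply/negP => Eij.
    have := le_trans hM (bigmin_le_cond _ _ Eij).
    by rewrite hv leye_eq.
  - by move: hn; rewrite hv.
have F1 i k : ((t i k)%:E * del i k = (t i k * d i k)%:E)%E.
  case: (dcase i k) => [-> | [-> -> _]]; first by rewrite EFinM.
  by rewrite mul0e mul0r.
have F2 i k : 0 < y i k -> Bd i = t i k * d i k.
  by case: (hopt i k) => h _ _ /h; rewrite F1 => -[].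
have F3 i k : y i k = 0 -> t i k * d i k <= Bd i.
  by case: (hopt i k) => _ h _ /h; rewrite F1 lee_fin.
have F4 i j k : E i j -> d i k <= w i j k.
  move=> Eij; case: (dcase i k) => [hd | [_ _ /(_ j)]]; last by rewrite Eij.
  have : (del i k <= (w i j k)%:E)%E.
    have hM : (del i k <= \big[Order.min/+oo%E]_(j : V | E i j) ((w i j k)%:E))%E.
      by rewrite /del /delta ge_min lexx orbT.
    exact: le_trans hM (bigmin_le_cond _ _ Eij).
  by rewrite hd lee_fin.
have F5 i j k : E i j -> 0 < phi i j k -> w i j k = d i k.
  move=> Eij hp; case: (dcase i k) => [hd | [_ _ /(_ j)]]; last by rewrite Eij.
  case: (hopt i k) => _ _ /(_ j Eij) [/(_ hp) h _].
  have : ((w i j k)%:E = (d i k)%:E)%E by rewrite -hd.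
  by case.
have F6 i k : dT i k = d i k * (c i k - y i k).
  case: (hdT i k) => -> _.
  rewrite -hc mulr_sumr big_mkcond /=; apply: eq_bigr => j _.
  case: ifP => Eij; last by rewrite hphiE ?Eij // !(mul0r, mulr0).
  have := hphi i j k; case/andP; rewrite le_eqVlt => /orP [/eqP <- _|hp _].
    by rewrite !(mul0r, mulr0).
  by rewrite -/(w i j k) (F5 _ _ _ Eij hp) mulrC.
have F7 i k : (del i k * ((y i k - y' i k) * (t' i k - t i k))%:E =
               (d i k * ((y i k - y' i k) * (t' i k - t i k)))%:E)%E.
  case: (dcase i k) => [-> | [-> _ hn]]; first by rewrite EFinM.
  have e1 : y i k = c i k.
    by rewrite /c -(hcons i k) big1 ?addr0 // => j _; rewrite hphiE.
  have e2 : y' i k = c i k.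
    by rewrite /c -(hcons' i k) big1 ?addr0 // => j _; rewrite hphiE'.
  by rewrite e1 e2 subrr !mul0r mulr0 mule0.
have F8 i k : dT i k = \sum_j w i j k * phi i j k.
  case: (hdT i k) => -> _; rewrite big_mkcond /=; apply: eq_bigr => j _.
  case: ifP => Eij; last by rewrite hphiE ?Eij // !(mul0r, mulr0).
  by rewrite mulrC.
set Dd := fun a b => derive1 (D a b) (flow phi t a b).
have Pk k : \sum_i d i k * ((y i k - y' i k) * (t' i k - t i k)) <=
   \sum_i \sum_j Dd j i * (t' i k * phi' i j k - t i k * phi i j k)
   + \sum_i Bd i * (y' i k - y i k).
  have e1 : \sum_i \sum_j Dd j i * (t' i k * phi' i j k - t i k * phi i j k)
     = \sum_i \sum_j w i j k * (t' i k * phi' i j k - t i k * phi i j k)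
       - \sum_i \sum_j dT j k * (t' i k * phi' i j k - t i k * phi i j k).
    rewrite -sumrB; apply: eq_bigr => i _; rewrite -sumrB; apply: eq_bigr => j _.
    by rewrite /w /Dd; ring.
  have e2 : \sum_i \sum_j dT j k * (t' i k * phi' i j k - t i k * phi i j k)
     = \sum_i dT i k * (t' i k - t i k).
    rewrite exchange_big; apply: eq_bigr => j _ /=.
    rewrite -mulr_sumr sumrB [t' j k](ht' j k) [t j k](ht j k); ring.
  have e3 : \sum_i \sum_j w i j k * (t' i k * phi' i j k - t i k * phi i j k)
     = \sum_i (t' i k * \sum_j w i j k * phi' i j k - t i k * dT i k).
    apply: eq_bigr => i _; rewrite F8 !mulr_sumr -sumrB; apply: eq_bigr => j _; ring.
  rewrite e1 e2 e3 -sumrB -big_split /=; apply: ler_sum => i _.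
  have h1 : t' i k * (d i k * (c i k - y' i k)) <= t' i k * \sum_j w i j k * phi' i j k.
    apply: ler_wpM2l; first exact: t'ge0.
    rewrite -hc' mulr_sumr; apply: ler_sum => j _.
    case Eij: (E i j); last by rewrite hphiE' ?Eij // !mulr0.
    apply: ler_wpM2r; first by case/andP: (hphi' i j k).
    exact: F4.
  have h2 : t i k * d i k * (y' i k - y i k) <= Bd i * (y' i k - y i k).
    case/andP: (hy i k); rewrite le_eqVlt => /orP [/eqP e0 _|hp _].
      rewrite -e0 subr0; apply: ler_wpM2r; first by case/andP: (hy' i k).
      exact: F3.
    by rewrite (F2 _ _ hp).
  rewrite F6.
  nra.
rewrite (eq_bigr (fun i => (\sum_k d i k * ((y i k - y' i k) * (t' i k - t i k)))%:E)%E);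
  last by move=> i _; rewrite -sumEFin; apply: eq_bigr => k _; exact: F7.
rewrite sumEFin lee_fin.
have Fge0 a b : 0 <= flow phi t a b.
  by apply: sumr_ge0 => k _; apply: mulr_ge0 => //; case/andP: (hphi b a k).
have F'ge0 a b : 0 <= flow phi' t' a b.
  by apply: sumr_ge0 => k _; apply: mulr_ge0 => //; case/andP: (hphi' b a k).
have Yge0 i : 0 <= cache_load y i.
  by apply: sumr_ge0 => k _; case/andP: (hy i k).
have Y'ge0 i : 0 <= cache_load y' i.
  by apply: sumr_ge0 => k _; case/andP: (hy' i k).
have L1 : \sum_a \sum_(b | E a b) Dd a b * (flow phi' t' a b - flow phi t a b)
   <= \sum_a \sum_(b | E a b) D a b (flow phi' t' a b)
      - \sum_a \sum_(b | E a b) D a b (flow phi t a b).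
  rewrite -sumrB; apply: ler_sum => a _; rewrite -sumrB; apply: ler_sum => b Eab.
  exact: conv_grad (hD a b Eab) (Fge0 a b) (F'ge0 a b).
have L2 : \sum_i Bd i * (cache_load y' i - cache_load y i)
   <= \sum_i B i (cache_load y' i) - \sum_i B i (cache_load y i).
  rewrite -sumrB; apply: ler_sum => i _.
  exact: conv_grad (hB i) (Yge0 i) (Y'ge0 i).
have eL1 : \sum_a \sum_(b | E a b) Dd a b * (flow phi' t' a b - flow phi t a b)
  = \sum_k \sum_i \sum_j Dd j i * (t' i k * phi' i j k - t i k * phi i j k).
  transitivity (\sum_a \sum_b \sum_k Dd a b * (t' b k * phi' b a k - t b k * phi b a k)).
    apply: eq_bigr => a _; rewrite big_mkcond /=; apply: eq_bigr => b _.
    case: ifP => Eab.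
      by rewrite /flow -sumrB mulr_sumr.
    rewrite big1 // => k _.
    have nE : ~~ E b a by rewrite Esym Eab.
    by rewrite (hphiE' b a k nE) (hphiE b a k nE) !mulr0 subrr mulr0.
  rewrite exchange_big /=.
  rewrite (eq_bigr (fun i => \sum_k \sum_j Dd j i * (t' i k * phi' i j k - t i k * phi i j k)));
    last by move=> i _; rewrite exchange_big.
  by rewrite exchange_big.
have eL2 : \sum_i Bd i * (cache_load y' i - cache_load y i)
   = \sum_k \sum_i Bd i * (y' i k - y i k).
  rewrite exchange_big /=; apply: eq_bigr => i _.
  by rewrite /cache_load -sumrB mulr_sumr.
rewrite exchange_big /=.
apply: le_trans; first by apply: ler_sum => k _; exact: Pk.
rewrite big_split /= -eL1 -eL2.
rewrite /total_cost.
move: L1 L2; rewrite -/Dd -/Bd; lra.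
Qed.
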